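(* Let $G$ and $H$ be two nontrivial connected graphs. For $\ast\in\{\boxtimes,\circ\}$, $C_{cc}(G\ast H)=\alpha(G\ast H)$.
   Context: All graphs are finite, simple and undirected. For a graph $G$ and $S\subseteq V(G)$, the cycle interval $\langle S\rangle$ consists of the vertices of $S$ together with every vertex $w\in V(G)\setminus S$ such that $G[S\cup\{w\}]$ contains a cycle through $w$; $S$ is cycle convex if $\langle S\rangle=S$. The cycle convexity number $C_{cc}(G)$ is the maximum cardinality of a proper (i.e. $\neq V(G)$) cycle convex subset of $V(G)$. $\alpha$ denotes the independence number. The strong product $G\boxtimes H$ has vertex set $V(G)\times V(H)$ with $(g_1,h_1)\sim(g_2,h_2)$ iff ($g_1\sim g_2$, $h_1=h_2$) or ($g_1=g_2$, $h_1\sim h_2$) or ($g_1\sim g_2$, $h_1\sim h_2$). The lexicographic product $G\circ H$ has vertex set $V(G)\times V(H)$ with $(g_1,h_1)\sim(g_2,h_2)$ iff $g_1\sim g_2$, or ($g_1=g_2$ and $h_1\sim h_2$). A graph is nontrivial if it has at least two vertices. *)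

(* Defs.v *)
From mathcomp Require Import all_boot.
Set Implicit Arguments. Unset Strict Implicit. Unset Printing Implicit Defensive.

Section Graphs.
Variable T : finType.
Variable e : rel T.

Definition simple_graph : Prop := symmetric e /\ irreflexive e.

Definition connected_graph : Prop := forall x y : T, connect e x y.

Definition nontrivial : Prop := 1 < #|T|.

(* A duplicate-free sequence has length <= #|T|, so the
   search over lengths n <= #|T| loses nothing (this only makes it boolean). *)
Definition has_cycle_through (A : {set T}) (w : T) : bool :=
  [exists n : 'I_(#|T|).+1, exists t : n.-tuple T,
     [&& uniq t, 3 <= n, w \in t, all (fun x => x \in A) t & cycle e t]].

Definition cycle_interval (S : {set T}) : {set T} :=
  S :|: [set w | (w \notin S) && has_cycle_through (w |: S) w].

Definition cycle_convex (S : {set T}) : bool := cycle_interval S == S.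

Definition Ccc : nat :=
  \max_(S : {set T} | cycle_convex S && (S != [set: T])) #|S|.

Definition independent (S : {set T}) : bool :=
  [forall x in S, forall y in S, ~~ e x y].

Definition alpha : nat := \max_(S : {set T} | independent S) #|S|.

End Graphs.

Section Products.
Variables (T1 T2 : finType) (e1 : rel T1) (e2 : rel T2).

Definition strong_prod : rel (T1 * T2) := fun x y =>
  [|| e1 x.1 y.1 && (x.2 == y.2),
      (x.1 == y.1) && e2 x.2 y.2
    | e1 x.1 y.1 && e2 x.2 y.2].

Definition lex_prod : rel (T1 * T2) := fun x y =>
  e1 x.1 y.1 || (x.1 == y.1) && e2 x.2 y.2.

End Products.

(* Main.v *)
Require Import Defs.
From mathcomp Require Import all_boot.
Set Implicit Arguments. Unset Strict Implicit. Unset Printing Implicit Defensive.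

Section Gen.
Variable T : finType.
Variable E : rel T.
Hypothesis Esym : symmetric E.
Hypothesis Eirr : irreflexive E.

Lemma indepP (S : {set T}) x y : independent E S -> x \in S -> y \in S -> E x y = false.
Proof.
move=> /forall_inP H xS yS; have /forall_inP H2 := H x xS.
by apply/negbTE; apply: H2.
Qed.

Lemma no_cycle (S : {set T}) w (s : seq T) : independent E S -> w \notin S ->
  uniq s -> 3 <= size s -> w \in s -> all (fun x => x \in w |: S) s -> cycle E s -> False.
Proof.
move=> HI wS Hu H3 Hw Hall Hc.
case: (rot_to Hw) => i s' Hrot.
have Hu' : uniq (w :: s') by rewrite -Hrot rot_uniq.
have Hc' : cycle E (w :: s') by rewrite -Hrot rot_cycle.
have Hs' : size (w :: s') = size s by rewrite -Hrot size_rot.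
have Hm : forall x, x \in w :: s' -> x \in w |: S.
  by move=> x; rewrite -Hrot mem_rot; apply: (allP Hall).
rewrite -Hs' in H3; move: Hu' Hc' H3 Hm; clear Hrot Hs'; case: s' => [|a [|b r]] //=.
rewrite !inE => /andP [/norP [wa /norP [wb _]] _] /andP [_ /andP [Eab _]] _ Hm.
have aS : a \in S.
  by have := Hm a; rewrite !inE eqxx orbT /= => /(_ isT) /orP [/eqP aw|//]; rewrite aw eqxx in wa.
have bS : b \in S.
  by have := Hm b; rewrite !inE eqxx !orbT /= => /(_ isT) /orP [/eqP bw|//]; rewrite bw eqxx in wb.
by rewrite (indepP HI aS bS) in Eab.
Qed.

Lemma indep_cc (S : {set T}) : independent E S -> cycle_convex E S.
Proof.
move=> HI; apply/eqP/setP => w; rewrite /cycle_interval !inE.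
case wS: (w \in S) => //=.
rewrite /has_cycle_through; apply/negbTE/negP => /existsP [n]. move=> /existsP [t]. move=> /and5P [Hu H3 Hw Hall Hc].
apply: (no_cycle HI _ Hu _ Hw Hall Hc); first by rewrite wS.
by rewrite size_tuple.
Qed.

Lemma cc_closed (S : {set T}) u v w : cycle_convex E S -> u \in S -> v \in S ->
  E u v -> E u w -> E v w -> w \in S.
Proof.
move=> /eqP Hcc uS vS Euv Euw Evw.
case wS: (w \in S) => //.
have Hu : uniq [:: w; u; v].
  rewrite /= !inE; apply/andP; split.
    apply/norP; split; apply/negP => /eqP E1; subst w; by rewrite ?uS ?vS in wS.
  rewrite andbT; apply/negP => /eqP E1; subst v; by rewrite Eirr in Euv.
have H3 : 3 < #|T|.+1 by rewrite ltnS; have := max_card (mem [:: w; u; v]); by rewrite (card_uniqP Hu).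
suff : w \in cycle_interval E S by rewrite Hcc wS.
rewrite /cycle_interval !inE wS /=.
apply/existsP; exists (Ordinal H3); apply/existsP; exists [tuple w; u; v].
rewrite [uniq _]Hu /= !inE eqxx uS vS !orbT /= Euv Evw andbT.
by rewrite Esym Euw.
Qed.

Lemma Ccc_alpha : (exists x y, E x y) ->
  (forall S, cycle_convex E S -> S != setT -> independent E S) -> Ccc E = alpha E.
Proof.
move=> [x [y Exy]] H; apply/eqP; rewrite eqn_leq; apply/andP; split.
  apply/bigmax_leqP => S /andP [H1 H2]; apply: leq_bigmax_cond; exact: H.
apply/bigmax_leqP => S HI; apply: leq_bigmax_cond; rewrite indep_cc //=.
apply/negP => /eqP ST; subst S.
by rewrite (indepP HI (in_setT x) (in_setT y)) in Exy.
Qed.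

End Gen.

Lemma conn_ind (T : finType) (e : rel T) (P : T -> Prop) a :
  connected_graph e -> P a -> (forall x z, P x -> e x z -> P z) -> forall y, P y.
Proof.
move=> Hc Pa Hs y; have /connectP [p Hp ->] := Hc a y.
elim: p a Pa Hp => [|b p IH] a Pa //= /andP [eab Hp].
exact: (IH b (Hs a b Pa eab) Hp).
Qed.

Lemma nbr (T : finType) (e : rel T) : connected_graph e -> nontrivial T ->
  forall x, exists y, e x y.
Proof.
move=> Hc; rewrite /nontrivial => /card_gt1P [a [b [_ _ ab]]] x.
have [z [xz Hz]] : exists z, x != z /\ connect e x z.
  case: (eqVneq x a) => [xa|xa]; last by exists a.
  by exists b; rewrite xa; split.
move/connectP: Hz => [[|y p] /= Hp Hl]; first by rewrite Hl eqxx in xz.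
by exists y; case/andP: Hp.
Qed.

Section Prod.
Variables (T1 T2 : finType) (e1 : rel T1) (e2 : rel T2).
Hypotheses (s1 : simple_graph e1) (s2 : simple_graph e2).
Hypotheses (n1 : nontrivial T1) (n2 : nontrivial T2).
Hypotheses (c1 : connected_graph e1) (c2 : connected_graph e2).

Notation st := (strong_prod e1 e2).
Notation lx := (lex_prod e1 e2).

Lemma st_sym : symmetric st.
Proof.
case: s1 s2 => [sy1 _] [sy2 _] [a b] [c d]; rewrite /strong_prod /=.
by rewrite sy1 sy2 (eq_sym a) (eq_sym b).
Qed.

Lemma lx_sym : symmetric lx.
Proof.
case: s1 s2 => [sy1 _] [sy2 _] [a b] [c d]; rewrite /lex_prod /=.
by rewrite sy1 sy2 (eq_sym a).
Qed.

Lemma st_irr : irreflexive st.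
Proof.
case: s1 s2 => [_ i1] [_ i2] [a b]; rewrite /strong_prod /=.
by rewrite i1 i2 !andbF.
Qed.

Lemma lx_irr : irreflexive lx.
Proof.
case: s1 s2 => [_ i1] [_ i2] [a b]; rewrite /lex_prod /=.
by rewrite i1 i2 andbF.
Qed.

Lemma st_lx u v : st u v -> lx u v.
Proof.
case: u v => [a b] [c d]; rewrite /strong_prod /lex_prod /=.
by case/or3P => /andP [H1 H2]; rewrite H1 ?H2 ?orbT.
Qed.

Section Core.
Variable S : {set T1 * T2}.
Hypothesis Hcl : forall u v w, u \in S -> v \in S -> st u v -> st u w -> st v w -> w \in S.

Lemma stE a b c d : st (a, b) (c, d) =
  [|| e1 a c && (b == d), (a == c) && e2 b d | e1 a c && e2 b d].
Proof. by []. Qed.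

Ltac st_solve := rewrite stE; apply/or3P; first
  [ (apply: Or31; apply/andP; split; by rewrite ?eqxx)
  | (apply: Or32; apply/andP; split; by rewrite ?eqxx)
  | (apply: Or33; apply/andP; split; by rewrite ?eqxx) ].

Lemma lemA g g' h : e1 g g' -> (g, h) \in S -> (g', h) \in S ->
  forall y, (g, y) \in S /\ (g', y) \in S.
Proof.
move=> E hS h'S; apply: (conn_ind (P := fun y => (g, y) \in S /\ (g', y) \in S) (a := h) c2).
  by split.
move=> x z [xS x'S] Exz.
have E' : e1 g' g by case: s1 => sy _; rewrite sy.
have Ezx : e2 z x by case: s2 => sy _; rewrite sy.
have zS : (g, z) \in S.
  by apply: (Hcl xS x'S); st_solve.
split => //; apply: (Hcl xS zS); st_solve.
Qed.

Lemma lemB g g'' h h' : e2 h h' -> (g, h) \in S -> (g, h') \in S -> e1 g g'' ->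
  (g'', h) \in S.
Proof.
move=> E hS h'S E1.
case: s2 => [sy2 _].
have E' : e2 h' h by rewrite sy2.
have E1' : e1 g'' g by case: s1 => sy _; rewrite sy.
by apply: (Hcl hS h'S); st_solve.
Qed.

Lemma edge2 : exists h h', e2 h h'.
Proof.
have /card_gt1P [a [_ [_ _ _]]] := n2.
by have [b Hb] := nbr c2 n2 a; exists a, b.
Qed.

Lemma full_h g0 g1 h : e1 g0 g1 -> (g0, h) \in S -> (g1, h) \in S -> forall x, x \in S.
Proof.
move=> E h0 h1.
have col0 := lemA E h0 h1.
have Hall : forall g, forall y, (g, y) \in S.
  apply: (conn_ind (P := fun g => forall y, (g, y) \in S) c1 (a := g0)).
    by move=> y; case: (col0 y).
  move=> x z Px Exz.
  have [k [k' Ek]] := edge2.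
  have zk : (z, k) \in S by apply: (lemB Ek (Px k) (Px k') Exz).
  by move=> y; case: (lemA Exz (Px k) zk y).
by case=> g y; apply: Hall.
Qed.

Lemma full_v g h h' : e2 h h' -> (g, h) \in S -> (g, h') \in S -> forall x, x \in S.
Proof.
move=> E hS h'S.
have [g'' E1] := nbr c1 n1 g.
exact: (full_h E1 hS (lemB E hS h'S E1)).
Qed.

Lemma full_st u v : u \in S -> v \in S -> st u v -> forall x, x \in S.
Proof.
case: u v => [a b] [c d] uS vS; rewrite stE.
case/or3P => /andP [E1 E2].
- by move/eqP: E2 => E2; subst d; apply: (full_h E1 uS vS).
- by move/eqP: E1 => E1; subst c; apply: (full_v E2 uS vS).
- have cb : (c, b) \in S.
    have E2' : e2 d b by case: s2 => sy _; rewrite sy.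
    by apply: (Hcl uS vS); st_solve.
  exact: (full_h E1 uS cb).
Qed.

End Core.

Lemma st_edge : exists x y, st x y.
Proof.
have [h [h' E]] := edge2.
have /card_gt1P [g [_ [_ _ _]]] := n1.
by exists (g, h), (g, h'); rewrite stE eqxx E orbT.
Qed.

Lemma st_main : Ccc st = alpha st.
Proof.
apply: (Ccc_alpha st_edge).
move=> S Hcc HT; apply/forall_inP => u uS; apply/forall_inP => v vS; apply/negP => Euv.
have Hcl : forall u v w, u \in S -> v \in S -> st u v -> st u w -> st v w -> w \in S.
  by move=> u1 v1 w1 H1 H2 H3 H4 H5; apply: (cc_closed st_sym st_irr Hcc H1 H2 H3 H4 H5).
move/negP: HT; apply; apply/eqP/setP => x; rewrite inE.
exact: (full_st Hcl uS vS Euv).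
Qed.

Lemma lx_main : Ccc lx = alpha lx.
Proof.
apply: Ccc_alpha.
  by have [x [y E]] := st_edge; exists x, y; apply: st_lx.
move=> S Hcc HT; apply/forall_inP => u uS; apply/forall_inP => v vS; apply/negP => Euv.
have Hcl' : forall u v w, u \in S -> v \in S -> lx u v -> lx u w -> lx v w -> w \in S.
  by move=> u1 v1 w1 H1 H2 H3 H4 H5; apply: (cc_closed lx_sym lx_irr Hcc H1 H2 H3 H4 H5).
have Hcl : forall u v w, u \in S -> v \in S -> st u v -> st u w -> st v w -> w \in S.
  by move=> u' v' w' ? ? ? ? ?; apply: (Hcl' u' v'); auto using st_lx.
move/negP: HT; apply; apply/eqP/setP => x; rewrite inE.
move: Euv; case: u v uS vS => [a b] [c d] uS vS; rewrite /lex_prod /=.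
case/orP => [E1 | /andP [/eqP ac E2]].
- have [y Ey] := nbr c2 n2 d.
  have cy : (c, y) \in S.
    apply: (Hcl' _ _ _ uS vS); rewrite /lex_prod /= ?E1 ?eqxx ?Ey ?orbT //.
  apply: (full_v Hcl Ey vS cy).
- subst c; exact: (full_v Hcl E2 uS vS).
Qed.

End Prod.

Theorem mainTheorem14 (T1 T2 : finType) (e1 : rel T1) (e2 : rel T2) :
  simple_graph e1 -> simple_graph e2 ->
  nontrivial T1 -> nontrivial T2 ->
  connected_graph e1 -> connected_graph e2 ->
  Ccc (strong_prod e1 e2) = alpha (strong_prod e1 e2) /\
  Ccc (lex_prod e1 e2) = alpha (lex_prod e1 e2).
Proof.
move=> s1 s2 n1 n2 c1 c2; split; [exact: st_main | exact: lx_main].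
Qed.
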